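(* Let $p>p_0\geq 1$ be integers and let $f_n\in C[0,1]^p$. Define $\beta_0\in\mathbb{R}$ and $\boldsymbol{\beta}=(\beta_1,\ldots,\beta_p)'\in\mathbb{R}^p$ (the best linear approximation of $f_n$) by $$\beta_0+\boldsymbol{\beta}'\mathbf{x}=\mathop{\arg\min}_{g\in\{\phi_0+\boldsymbol{\phi}'\mathbf{x}:\ \phi_0\in\mathbb{R},\ \boldsymbol{\phi}\in\mathbb{R}^p\}}\int_{[0,1]^p}\left[f_n(\mathbf{x})-g(\mathbf{x})\right]^2d\mathbf{x}.$$ Suppose there exist $\widetilde{f}_n\in C[0,1]^{p_0}$ and $\eta_n>0$ such that $$\sup_{(x_1,\ldots,x_p)'\in[0,1]^p}\left|f_n(x_1,\ldots,x_p)-\widetilde{f}_n(x_1,\ldots,x_{p_0})\right|<\eta_n,$$ and a positive constant $\tau$ such that for each $j=1,\ldots,p_0$, $$\left|\int_{[0,1]^p}x_jf_n(\mathbf{x})d\mathbf{x}-\frac12\int_{[0,1]^p}f_n(\mathbf{x})d\mathbf{x}\right|>\tau.$$ Then $|\beta_j|<12\eta_n$ for $j=p_0+1,\ldots,p$, and $|\beta_j|>12\tau$ for $j=1,\ldots,p_0$.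
   Context: $\mathbf{x}=(x_1,\ldots,x_p)'$ and $C[0,1]^d$ denotes the continuous real functions on $[0,1]^d$. *)

(* Defs.v *)
From HB Require Import structures.
From mathcomp Require Import all_boot all_order all_algebra.
From mathcomp Require Import all_classical all_reals all_analysis.

Set Implicit Arguments.
Unset Strict Implicit.
Unset Printing Implicit Defensive.

Import Order.TTheory GRing.Theory Num.Theory numFieldNormedType.Exports.
Local Open Scope classical_set_scope.
Local Open Scope ring_scope.

(* Points of [0,1]^n are row vectors x : 'rV[R]_n; coordinate x_{i+1} of the
   paper is x 0 i (0-based ordinal i). *)

Definition unit_cube (R : realType) (n : nat) : set 'rV[R]_n :=
  [set x | forall i : 'I_n, 0 <= x 0 i <= 1].

(* For continuous integrands this is the Lebesgue
   integral over the cube with respect to n-dimensional Lebesgue measure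
   (Fubini). *)
Fixpoint cube_integral (R : realType) (n : nat) : ('rV[R]_n -> R) -> R :=
  match n with
  | 0 => fun f => f 0
  | m.+1 => fun f =>
      Rintegral (@lebesgue_measure R) `[0%R, 1%R]%classic
        (fun t : R => @cube_integral R m (fun y : 'rV[R]_m => f (row_mx (\row_(_ < 1) t) y)))
  end.

Definition cube_prefix (R : realType) (k n : nat) (h : (k <= n)%N) (x : 'rV[R]_n)
  : 'rV[R]_k := \row_(i < k) x 0 (widen_ord h i).

Definition affine (R : realType) (n : nat) (phi0 : R) (phi : 'rV[R]_n)
  (x : 'rV[R]_n) : R := phi0 + \sum_(j < n) phi 0 j * x 0 j.

(* Main.v *)
Require Import Defs.
From HB Require Import structures.
From mathcomp Require Import all_boot all_order all_algebra.
From mathcomp Require Import all_classical all_reals all_analysis.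
From mathcomp Require Import ring lra.
Import Order.TTheory GRing.Theory Num.Theory numFieldNormedType.Exports.
Local Open Scope classical_set_scope.
Local Open Scope ring_scope.

Set Implicit Arguments.
Unset Strict Implicit.
Section Dev.
Variable R : realType.
Notation cube n := (@unit_cube R n).
Notation I01 := (`[0%R, 1%R]%classic : set R).

Definition rowc m (t : R) (y : 'rV[R]_m) : 'rV[R]_(1 + m) := row_mx (\row_(_ < 1) t) y.

Lemma rowc0 m t (y : 'rV[R]_m) : rowc t y 0 (ord0 : 'I_(1 + m)) = t.
Proof.
rewrite /rowc (_ : (ord0 : 'I_(1 + m)) = lshift m (ord0 : 'I_1)); last exact: val_inj.
by rewrite row_mxEl mxE.
Qed.

Lemma rowcS m t (y : 'rV[R]_m) (i : 'I_m) : rowc t y 0 (lift ord0 i : 'I_(1 + m)) = y 0 i.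
Proof.
rewrite /rowc (_ : (lift ord0 i : 'I_(1 + m)) = rshift 1 i); last exact: val_inj.
by rewrite row_mxEr.
Qed.

Lemma rowc_coord2 m (Q : R -> R -> Prop) t t' (y y' : 'rV[R]_m) :
  Q t t' -> (forall j, Q (y 0 j) (y' 0 j)) ->
  forall i : 'I_(1 + m), Q (rowc t y 0 i) (rowc t' y' 0 i).
Proof.
move=> Qt Qy i; case: (unliftP ord0 i) => [j ->|->]; first by rewrite !rowcS.
by rewrite !rowc0.
Qed.

Lemma cube_rowc m t (y : 'rV[R]_m) : I01 t -> cube m y -> cube (1 + m) (rowc t y).
Proof.
move=> It cy i.
apply: (@rowc_coord2 m (fun a _ => 0 <= a <= 1) t t y y) => //.
Qed.

Lemma ball_rV n (x y : 'rV[R]_n) d :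
  ball x d y <-> (0 < d /\ forall i, `|x 0 i - y 0 i| < d).
Proof.
rewrite /ball /=; split => [[d0 H]|[d0 H]]; split => //.
  by move=> i; exact: H.
by move=> i j; rewrite (ord1 i); exact: H.
Qed.

Lemma good_ed n (g : 'rV[R]_n -> R) x : {within cube n, continuous g} -> cube n x ->
  forall e, 0 < e -> exists2 d, 0 < d &
   forall y, cube n y -> (forall i, `|x 0 i - y 0 i| < d) -> `|g x - g y| < e.
Proof.
move=> /subspace_continuousP gc cx e e0.
have := gc x cx; move/cvgrPdist_lt => /(_ e e0).
rewrite /within /= => /nbhs_ballP [d /= d0 H].
exists d => // y cy xy; apply: H => //.
by apply/ball_rV; split.
Qed.

Lemma ed_good n (g : 'rV[R]_n -> R) :
  (forall x, cube n x -> forall e, 0 < e -> exists2 d, 0 < d &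
   forall y, cube n y -> (forall i, `|x 0 i - y 0 i| < d) -> `|g x - g y| < e) ->
  {within cube n, continuous g}.
Proof.
move=> H; apply/subspace_continuousP => x cx.
apply/cvgrPdist_lt => e e0.
have [d d0 Hd] := H x cx e e0.
rewrite /within /=; apply/nbhs_ballP; exists d => //= y /ball_rV [_ xy] cy.
exact: Hd.
Qed.

Definition good n (g : 'rV[R]_n -> R) := {within cube n, continuous g}.

Lemma good_sect m (g : 'rV[R]_(1 + m) -> R) t : good g -> I01 t ->
  good (fun y => g (rowc t y)).
Proof.
move=> gg It; apply: ed_good => y cy e e0.
have [d d0 Hd] := good_ed gg (cube_rowc It cy) e0.
exists d => // y' cy' yy'; apply: Hd; first exact: cube_rowc.
apply: (@rowc_coord2 m (fun a b => `|a - b| < d)) => //.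
by rewrite subrr normr0.
Qed.

Lemma good_cst n c : good (fun _ : 'rV[R]_n => c).
Proof. exact: continuous_subspaceT (fun _ => cvg_cst c). Qed.

Lemma good_coord n (i : 'I_n) : good (fun x : 'rV[R]_n => x 0 i).
Proof. by apply: continuous_subspaceT => x; exact: coord_continuous. Qed.

Lemma goodD n (g h : 'rV[R]_n -> R) : good g -> good h -> good (fun x => g x + h x).
Proof.
move=> /subspace_continuousP gg /subspace_continuousP hh.
apply/subspace_continuousP => x cx; exact: cvgD (gg x cx) (hh x cx).
Qed.

Lemma goodM n (g h : 'rV[R]_n -> R) : good g -> good h -> good (fun x => g x * h x).
Proof.
move=> /subspace_continuousP gg /subspace_continuousP hh.
apply/subspace_continuousP => x cx; exact: cvgM (gg x cx) (hh x cx).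
Qed.

Lemma goodN n (g : 'rV[R]_n -> R) : good g -> good (fun x => - g x).
Proof.
move=> /subspace_continuousP gg.
apply/subspace_continuousP => x cx; exact: cvgN (gg x cx).
Qed.

Lemma goodB n (g h : 'rV[R]_n -> R) : good g -> good h -> good (fun x => g x - h x).
Proof. by move=> gg hh; apply: goodD => //; exact: goodN. Qed.

Lemma good_comp n (g : 'rV[R]_n -> R) (h : R -> R) : good g -> continuous h ->
  good (fun x => h (g x)).
Proof.
move=> /subspace_continuousP gg hc.
apply/subspace_continuousP => x cx; exact: cvg_comp (gg x cx) (hc _).
Qed.

Lemma good_sum_seq n (I : Type) (s : seq I) (F : I -> 'rV[R]_n -> R) : (forall j, good (F j)) ->
  good (fun x => \sum_(j <- s) F j x).
Proof.
move=> FF; elim: s => [|a s IH].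
  have -> : (fun x => \sum_(j <- [::]) F j x) = fun _ => 0.
    by apply: funext => x; rewrite big_nil.
  exact: good_cst.
have -> : (fun x => \sum_(j <- a :: s) F j x) = fun x => F a x + \sum_(j <- s) F j x.
  by apply: funext => x; rewrite big_cons.
exact: goodD.
Qed.

Lemma good_sum n k (F : 'I_k -> 'rV[R]_n -> R) : (forall j, good (F j)) ->
  good (fun x => \sum_(j < k) F j x).
Proof. by move=> FF; apply: good_sum_seq. Qed.

End Dev.
Section Integ.
Variable R : realType.
Notation cube n := (@unit_cube R n).
Notation I01 := (`[0%R, 1%R]%classic : set R).
Notation mu := (@lebesgue_measure R).

Lemma int01 (F : R -> R) : {within I01, continuous F} -> mu.-integrable I01 (EFin \o F).
Proof. by move=> cF; apply: continuous_compact_integrable => //; exact: segment_compact. Qed.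

Lemma Rint_cst (c : R) : \int[mu]_(x in I01) c = c.
Proof.
rewrite Rintegral_cst //= lebesgue_measure_itv /= lte_fin ltr01 /=.
by rewrite subr0 mulr1.
Qed.

Lemma I_S m (g : 'rV[R]_(1 + m) -> R) :
  cube_integral g = \int[mu]_(t in I01) cube_integral (fun y => g (rowc t y)).
Proof. by []. Qed.

Lemma I_cst n (c : R) : cube_integral (fun _ : 'rV[R]_n => c) = c.
Proof.
elim: n => [//|m IH].
by rewrite (I_S (fun _ => c)) IH Rint_cst.
Qed.

Lemma cube0 n : cube n 0.
Proof. by move=> i; rewrite mxE lexx ler01. Qed.

Definition lin_prop m :=
  [/\ (forall g h : 'rV[R]_m -> R, good g -> good h ->
        cube_integral (fun x => g x + h x) = cube_integral g + cube_integral h),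
      (forall c (g : 'rV[R]_m -> R), good g ->
        cube_integral (fun x => c * g x) = c * cube_integral g) &
      (forall g h : 'rV[R]_m -> R, good g -> good h -> (forall x, cube m x -> g x <= h x) ->
        cube_integral g <= cube_integral h)].

Lemma I_close m (Pm : lin_prop m) (g h : 'rV[R]_m -> R) e : good g -> good h ->
  (forall x, cube m x -> `|g x - h x| <= e) ->
  `|cube_integral g - cube_integral h| <= e.
Proof.
case: Pm => Plin _ Pmono gg gh H.
have ge : good (fun _ : 'rV[R]_m => e) by exact: good_cst.
have h1 : cube_integral g <= cube_integral h + e.
  have := Pmono g (fun x => h x + e) gg (goodD gh ge).
  rewrite Plin // I_cst; apply => x cx.
  by have := H x cx => /ler_normlP [k1 k2]; lra.
have h2 : cube_integral h <= cube_integral g + e.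
  have := Pmono h (fun x => g x + e) gh (goodD gg ge).
  rewrite Plin // I_cst; apply => x cx.
  by have := H x cx => /ler_normlP [k1 k2]; lra.
by apply/ler_normlP; split; lra.
Qed.

Lemma cube_compact n : compact (cube n).
Proof.
have -> : cube n = [set v : 'rV[R]_n | forall i, I01 (v ord0 i)].
  by apply: funext => v; apply: propext; split => H i; have := H i; rewrite /= in_itv.
have H := (@rV_compact R n (fun _ => I01) (fun _ => @segment_compact R 0 1)).
exact: H.
Qed.

Lemma param_cont m (Pm : lin_prop m) (g : 'rV[R]_(1 + m) -> R) : good g ->
  {within I01, continuous (fun t => cube_integral (fun y => g (rowc t y)))}.
Proof.
move=> gg; apply/subspace_continuousP => t0 It0.
apply/cvgrPdist_lt => e e0.
have e40 : 0 < e / 4 by rewrite divr_gt0.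
have nc : near_covering_within (cube m).
  by apply/near_covering_withinP; apply/compact_near_coveringP; exact: cube_compact.
have H : forall x, cube m x -> \forall x' \near x & i \near within I01 (nbhs t0), cube m x' -> 
   I01 i /\ `|g (rowc i x') - g (rowc t0 x')| <= e / 2.
  move=> y cy.
  have [d d0 Hd] := good_ed gg (cube_rowc It0 cy) e40.
  exists (ball y d, [set t | I01 t /\ `|t0 - t| < d]) => /=.
    split; first by apply/nbhs_ballP; exists d.
    rewrite /within /=; apply/nbhs_ballP; exists d => // t /= tt It; split => //.
  case => y' t /= [/ball_rV [_ yy'] [It tt0]] cy'; split => //.
  have t00 : `|t0 - t0| < d by rewrite subrr normr0.
  have A1 := Hd (rowc t y') (cube_rowc It cy') 
    (rowc_coord2 (Q := fun a b : R => is_true (`|a - b| < d)) tt0 yy').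
  have A2 := Hd (rowc t0 y') (cube_rowc It0 cy') 
    (rowc_coord2 (Q := fun a b : R => is_true (`|a - b| < d)) t00 yy').
  rewrite (_ : g (rowc t y') - g (rowc t0 y') = 
     (g (rowc t0 y) - g (rowc t0 y')) - (g (rowc t0 y) - g (rowc t y'))); last by ring.
  apply: (le_trans (ler_normB _ _)); lra.
have HK := nc R _ _ (within_filter _ _) H.
near=> t.
have Kt : forall y, cube m y -> I01 t /\ `|g (rowc t y) - g (rowc t0 y)| <= e / 2.
  by near: t; exact: HK.
have [It _] := Kt 0 (@cube0 m).
have Hc := I_close Pm (good_sect gg It0) (good_sect gg It) (e := e / 2).
apply: (le_lt_trans (Hc _)); last lra.
by move=> y cy; have [_ +] := Kt y cy; rewrite distrC.
Unshelve. all: by end_near.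
Qed.

Lemma lin_all m : lin_prop m.
Proof.
elim: m => [|m [Plin Pscale Pmono]].
  split => //.
  by move=> g h _ _ H; apply: H; exact: (@cube0 0).
have Pm : lin_prop m by split.
have integ (g : 'rV[R]_(1 + m) -> R) : good g ->
    mu.-integrable I01 (EFin \o (fun t => cube_integral (fun y => g (rowc t y)))).
  by move=> gg; apply: int01; exact: param_cont.
split.
- move=> g h gg gh.
  rewrite !(I_S (m := m)).
  rewrite -RintegralD //; try exact: integ.
  by apply: eq_Rintegral => t /set_mem It /=; rewrite Plin //; exact: good_sect.
- move=> c g gg.
  rewrite !(I_S (m := m)).
  rewrite -RintegralZl //; last exact: integ.
  by apply: eq_Rintegral => t /set_mem It /=; rewrite Pscale //; exact: good_sect.
- move=> g h gg gh H.
  rewrite !(I_S (m := m)).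
  apply: le_Rintegral => //; try exact: integ.
  move=> t It; apply: Pmono; try exact: good_sect.
  by move=> y cy; apply: H; exact: cube_rowc.
Qed.

Lemma I_lin n (g h : 'rV[R]_n -> R) : good g -> good h ->
  cube_integral (fun x => g x + h x) = cube_integral g + cube_integral h.
Proof. by case: (lin_all n) => + _ _; apply. Qed.

Lemma I_scale n c (g : 'rV[R]_n -> R) : good g ->
  cube_integral (fun x => c * g x) = c * cube_integral g.
Proof. by case: (lin_all n) => _ + _; apply. Qed.

Lemma I_sub n (g h : 'rV[R]_n -> R) : good g -> good h ->
  cube_integral (fun x => g x - h x) = cube_integral g - cube_integral h.
Proof.
move=> gg gh.
have -> : (fun x => g x - h x) = (fun x => g x + (-1) * h x).
  by apply: funext => x; rewrite mulN1r.
by rewrite I_lin ?I_scale ?mulN1r //; apply: goodM => //; exact: good_cst.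
Qed.

Lemma I_ext n (g h : 'rV[R]_n -> R) : g =1 h -> cube_integral g = cube_integral h.
Proof. by move=> /funext ->. Qed.

Lemma I_sum n k (F : 'I_k -> 'rV[R]_n -> R) : (forall j, good (F j)) ->
  cube_integral (fun x => \sum_(j < k) F j x) = \sum_(j < k) cube_integral (F j).
Proof.
move=> FF.
suff H : forall s, cube_integral (fun x => \sum_(j <- s) F j x) = \sum_(j <- s) cube_integral (F j).
  exact: H.
elim => [|a s IH].
  rewrite big_nil (I_ext (h := fun _ => 0)) ?I_cst // => x; exact: big_nil.
rewrite big_cons -IH -I_lin //.
  by apply: I_ext => x; rewrite big_cons.
exact: good_sum_seq.
Qed.

Lemma indep n (j : 'I_n) (g : 'rV[R]_n -> R) (h : R -> R) : good g -> continuous h ->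
  (forall x y : 'rV[R]_n, (forall i, i != j -> x 0 i = y 0 i) -> g x = g y) ->
  cube_integral (fun x => g x * h (x 0 j)) = (\int[mu]_(t in I01) h t) * cube_integral g.
Proof.
elim: n j g => [|m IH] j g gg hc ginv; first by have := ltn_ord j; rewrite ltn0.
have ih : mu.-integrable I01 (EFin \o h) by apply: int01; exact: continuous_subspaceT.
have I0 : I01 0 by rewrite /= in_itv /= lexx ler01.
rewrite !(I_S (m := m)).
case: (unliftP ord0 j) => [j' Ej|Ej]; subst j.
- rewrite -RintegralZl //; last by apply: int01; apply: param_cont => //; exact: lin_all.
  apply: eq_Rintegral => t /set_mem It /=.
  rewrite -(IH j' (fun y => g (rowc t y))) //; first by apply: I_ext => y; rewrite rowcS.
  + exact: good_sect.
  + move=> x y xy; apply: ginv => i; case: (unliftP ord0 i) => [i' ->|->].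
      by rewrite !rowcS => ne; apply: xy; apply: contraNneq ne => ->.
    by rewrite !rowc0.
- have E : forall t y, g (rowc t y) = g (rowc 0 y).
    move=> t y; apply: ginv => i; case: (unliftP ord0 i) => [i' ->|->].
      by rewrite !rowcS.
    by rewrite eqxx.
  transitivity (\int[mu]_(t in I01) (h t * cube_integral (fun y => g (rowc 0 y)))).
    apply: eq_Rintegral => t _ /=; rewrite -I_scale; last exact: good_sect.
    by apply: I_ext => y; rewrite rowc0 E mulrC.
  rewrite RintegralZr //; congr (_ * _).
  transitivity (\int[mu]_(t in I01) cube_integral (fun y => g (rowc 0 y))).
    by rewrite Rint_cst.
  by apply: eq_Rintegral => t _ /=; apply: I_ext => y; rewrite E.
Qed.

Lemma cont_onem : continuous (fun t : R => 1 - t).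
Proof. by move=> x; apply: continuousB => //; exact: cvg_cst. Qed.

Lemma cont_sq : continuous (fun t : R => (1 - t) ^+ 2).
Proof.
have -> : (fun t : R => (1 - t) ^+ 2) = (fun t => (1 - t) * (1 - t)).
  by apply: funext => t; rewrite expr2.
by move=> x; apply: cvgM; exact: cont_onem.
Qed.

Lemma icont (F : R -> R) : continuous F -> mu.-integrable I01 (EFin \o F).
Proof. by move=> cF; apply: int01; exact: continuous_subspaceT. Qed.

Lemma int_onem : \int[mu]_(t in I01) (1 - t) = 2^-1.
Proof.
have := @Rintegral_onemXn R 1.
by under eq_Rintegral do rewrite expr1.
Qed.

Lemma int_onem2 : \int[mu]_(t in I01) ((1 - t) ^+ 2) = 3^-1.
Proof. exact: (@Rintegral_onemXn R 2). Qed.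

Lemma int_w : \int[mu]_(t in I01) (t - 2^-1) = 0.
Proof.
transitivity (\int[mu]_(t in I01) (2^-1 - (1 - t))).
  by apply: eq_Rintegral => t _; field.
rewrite RintegralB //; first by rewrite Rint_cst int_onem subrr.
- exact: icont (fun _ => cvg_cst _).
- exact: icont cont_onem.
Qed.

Lemma int_xw : \int[mu]_(t in I01) (t * (t - 2^-1)) = 12^-1.
Proof.
transitivity (\int[mu]_(t in I01) (((1 - t) ^+ 2 + (- (3 / 2)) * (1 - t)) + 2^-1)).
  by apply: eq_Rintegral => t _; field.
have c1 : continuous (fun t : R => - (3 / 2) * (1 - t)).
  by move=> x; apply: cvgM; [exact: cvg_cst | exact: cont_onem].
rewrite RintegralD //; last exact: icont (fun _ => cvg_cst _); last first.
  by apply: icont => x; apply: cvgD; [exact: cont_sq | exact: c1].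
rewrite RintegralD //; [|exact: icont cont_sq|exact: icont c1].
rewrite RintegralZl //; last exact: icont cont_onem.
rewrite int_onem2 int_onem Rint_cst.
by field.
Qed.

Lemma good_affine n b0 (b : 'rV[R]_n) : good (affine b0 b).
Proof.
apply: goodD; first exact: good_cst.
apply: good_sum => j; apply: goodM; [exact: good_cst | exact: good_coord].
Qed.

Lemma affine_shift n b0 (b : 'rV[R]_n) s (k : 'I_n) x :
  affine (b0 - s / 2) (b + s *: delta_mx 0 k) x = affine b0 b x + s * (x 0 k - 2^-1).
Proof.
rewrite /affine.
have -> : \sum_(j < n) (b + s *: delta_mx 0 k) 0 j * x 0 j =
   \sum_(j < n) b 0 j * x 0 j + \sum_(j < n) s * ((j == k)%:R * x 0 j).
  rewrite -big_split /=; apply: eq_bigr => j _; rewrite !mxE /=; ring.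
have Hk : \sum_(i < n) (i == k)%:R * x 0 i = x 0 k.
  rewrite (bigD1 k) //= eqxx mul1r big1 ?addr0 // => i /negbTE ->; by rewrite mul0r.
rewrite -mulr_sumr Hk; by field.
Qed.

Lemma quad_zero n (r u : 'rV[R]_n -> R) : good r -> good u ->
  (forall s, cube_integral (fun x => r x ^+ 2) <=
             cube_integral (fun x => (r x - s * u x) ^+ 2)) ->
  cube_integral (fun x => r x * u x) = 0.
Proof.
move=> gr gu H.
set A := cube_integral (fun x => u x ^+ 2).
set B := cube_integral (fun x => r x * u x).
have gr2 : good (fun x => r x ^+ 2).
  by apply: (@eq_ind _ (fun x => r x * r x)); [exact: goodM | apply: funext => x; rewrite expr2].
have gu2 : good (fun x => u x ^+ 2).
  by apply: (@eq_ind _ (fun x => u x * u x)); [exact: goodM | apply: funext => x; rewrite expr2].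
have gru : good (fun x => r x * u x) by exact: goodM.
have E s : cube_integral (fun x => (r x - s * u x) ^+ 2) =
   cube_integral (fun x => r x ^+ 2) + (- 2 * s) * B + s ^+ 2 * A.
  have gc (c : R) : good (fun _ : 'rV[R]_n => c) by exact: good_cst.
  rewrite (I_ext (h := fun x => (r x ^+ 2 + (-2 * s) * (r x * u x)) + s ^+ 2 * (u x ^+ 2))); last first.
    by move=> x; ring.
  rewrite I_lin; last by apply: goodM.
    rewrite I_lin //; last by apply: goodM.
    by rewrite !I_scale.
  by apply: goodD => //; apply: goodM.
have A0 : 0 <= A.
  rewrite /A -(I_cst n 0); case: (lin_all n) => _ _; apply => //; first exact: good_cst.
  by move=> x _; exact: sqr_ge0.
set s := B / (A + 1).
have hs : s * (A + 1) = B by rewrite /s mulfVK // gt_eqF // ltr_wpDl.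
have := H s; rewrite E => Hs.
have h1 : s ^+ 2 * (A + 2) <= 0.
  rewrite -hs in Hs; nra.
have s0 : s = 0.
  apply/eqP; rewrite -sqrf_eq0 eq_le sqr_ge0 andbT.
  by rewrite -(pmulr_lle0 _ (_ : 0 < A + 2)) //; lra.
by rewrite -hs s0 mul0r.
Qed.

Lemma I_xw n (k j : 'I_n) :
  cube_integral (fun x : 'rV[R]_n => x 0 k * (x 0 j - 2^-1)) = if k == j then 12^-1 else 0.
Proof.
have cid : continuous (fun t : R => t) by move=> t; exact: cvg_id.
have cw : continuous (fun t : R => t - 2^-1).
  by move=> t; apply: cvgB; [exact: cvg_id | exact: cvg_cst].
case: eqP => [->|/eqP kj].
  rewrite (I_ext (h := fun x => (fun _ => 1) x * (fun t => t * (t - 2^-1)) (x 0 j))); last first.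
    by move=> x; rewrite mul1r.
  rewrite (indep (g := fun _ => 1) (h := fun t => t * (t - 2^-1))) //.
    by rewrite int_xw I_cst mulr1.
  - exact: good_cst.
  - by move=> t; apply: cvgM; [exact: cid | exact: cw].
rewrite (I_ext (h := fun x => (fun y : 'rV[R]_n => y 0 k) x * (fun t => t - 2^-1) (x 0 j))) //.
rewrite (indep (g := fun y : 'rV[R]_n => y 0 k) (h := fun t => t - 2^-1)) //.
  by rewrite int_w mul0r.
- exact: good_coord.
- by move=> x y H; apply: H.
Qed.

Lemma I_w n (j : 'I_n) : cube_integral (fun x : 'rV[R]_n => x 0 j - 2^-1) = 0.
Proof.
have cw : continuous (fun t : R => t - 2^-1).
  by move=> t; apply: cvgB; [exact: cvg_id | exact: cvg_cst].
rewrite (I_ext (h := fun x => (fun _ => 1) x * (fun t => t - 2^-1) (x 0 j))); last first.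
  by move=> x; rewrite mul1r.
rewrite (indep (g := fun _ => 1) (h := fun t => t - 2^-1)) //.
  by rewrite int_w mul0r.
exact: good_cst.
Qed.

Lemma beta_formula p (f : 'rV[R]_p -> R) (gf : good f) beta0 (beta : 'rV[R]_p)
  (hbeta : forall (phi0 : R) (phi : 'rV[R]_p),
     cube_integral (fun x => (f x - affine beta0 beta x) ^+ 2)
       <= cube_integral (fun x => (f x - affine phi0 phi x) ^+ 2)) (j : 'I_p) :
  beta 0 j / 12 = cube_integral (fun x => f x * (x 0 j - 2^-1)).
Proof.
pose w := fun x : 'rV[R]_p => x 0 j - 2^-1.
pose r := fun x => f x - affine beta0 beta x.
have gc (c : R) : good (fun _ : 'rV[R]_p => c) by exact: good_cst.
have gw : good w by apply: goodB; [exact: good_coord | exact: gc].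
have gr : good r by apply: goodB => //; exact: good_affine.
have N : cube_integral (fun x => r x * w x) = 0.
  apply: quad_zero gr gw _ => s.
  have := hbeta (beta0 - s / 2) (beta + s *: delta_mx 0 j).
  rewrite (I_ext (g := fun x => (f x - affine (beta0 - s / 2) (beta + s *: delta_mx 0 j) x) ^+ 2)
     (h := fun x => (r x - s * w x) ^+ 2)) //.
  by move=> x; rewrite affine_shift /r /w; ring.
have gxw (k : 'I_p) : good (fun x => beta 0 k * (x 0 k * w x)).
  by apply: goodM => //; apply: goodM => //; exact: good_coord.
rewrite (I_ext (g := fun x => r x * w x)
  (h := fun x => f x * w x - (beta0 * w x + \sum_(k < p) beta 0 k * (x 0 k * w x)))) in N;
  last first.
  move=> x; rewrite /r /affine mulrBl mulrDl big_distrl /=; congr (_ - (_ + _)).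
  by apply: eq_bigr => k _; rewrite mulrA.
rewrite I_sub in N; last 2 first.
- by apply: goodM.
- by apply: goodD; [apply: goodM | apply: good_sum].
rewrite I_lin in N; last 2 first.
- by apply: goodM.
- by apply: good_sum.
rewrite I_scale // I_sum // in N.
have Hs : \sum_(k < p) cube_integral (fun x => beta 0 k * (x 0 k * w x)) = beta 0 j / 12.
  transitivity (\sum_(k < p) beta 0 k * (if k == j then 12^-1 else 0)).
    apply: eq_bigr => k _; rewrite I_scale; first by rewrite /w I_xw.
    by apply: goodM => //; exact: good_coord.
  rewrite (bigD1 j) //= eqxx big1 ?addr0 //.
  by move=> k /negbTE ->; rewrite mulr0.
rewrite Hs /w I_w mulr0 add0r in N.
by apply/eqP; rewrite eq_sym -subr_eq0; apply/eqP; rewrite -N.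
Qed.

End Integ.

Unset Implicit Arguments.
Set Strict Implicit.

Theorem theorem1 (R : realType) (p p0 : nat) (hp0 : (1 <= p0)%N)
  (hpp0 : (p0 < p)%N)
  (f : 'rV[R]_p -> R) (hf : {within @unit_cube R p, continuous f})
  (beta0 : R) (beta : 'rV[R]_p)
  (hbeta : forall (phi0 : R) (phi : 'rV[R]_p),
     cube_integral (fun x => (f x - affine beta0 beta x) ^+ 2)
       <= cube_integral (fun x => (f x - affine phi0 phi x) ^+ 2))
  (ft : 'rV[R]_p0 -> R) (hft : {within @unit_cube R p0, continuous ft})
  (eta : R) (heta : 0 < eta)
  (hsup : sup [set `|f x - ft (cube_prefix (ltnW hpp0) x)| | x in @unit_cube R p] < eta)
  (tau : R) (htau : 0 < tau)
  (hcorr : forall j : 'I_p, (j < p0)%N ->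
     tau < `| cube_integral (fun x => x 0 j * f x) - 2^-1 * cube_integral f |) :
  (forall j : 'I_p, (p0 <= j)%N -> `|beta 0 j| < 12 * eta) /\
  (forall j : 'I_p, (j < p0)%N -> 12 * tau < `|beta 0 j|).
Proof.
have gf : good f := hf.
have bf := beta_formula hf hbeta.
have gc (c : R) : good (fun _ : 'rV[R]_p => c) by exact: good_cst.
have gw (j : 'I_p) : good (fun x : 'rV[R]_p => x 0 j - 2^-1).
  by apply: goodB; [exact: good_coord | exact: gc].
have Cj (j : 'I_p) : cube_integral (fun x => x 0 j * f x) - 2^-1 * cube_integral f = beta 0 j / 12.
  rewrite bf -I_scale // -I_sub; first by apply: I_ext => x; ring.
    by apply: goodM => //; exact: good_coord.
  by apply: goodM.
have nb (j : 'I_p) : `|beta 0 j| = 12 * `|beta 0 j / 12|.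
  by rewrite normrM normfV (@ger0_norm _ 12) // mulrC mulfVK.
split.
- move=> j hj.
  pose fp := fun x => ft (cube_prefix (ltnW hpp0) x).
  have gfp : good fp.
    apply: ed_good => x cx e e0.
    have cpx : @unit_cube R p0 (cube_prefix (ltnW hpp0) x) by move=> i; rewrite mxE; exact: cx.
    have [d d0 Hd] := good_ed hft cpx e0.
    exists d => // y cy xy; apply: Hd; first by move=> i; rewrite mxE; exact: cy.
    by move=> i; rewrite !mxE; exact: xy.
  pose S := sup [set `|f x - ft (cube_prefix (ltnW hpp0) x)| | x in @unit_cube R p].
  have gd : good (fun x => `|f x - fp x|).
    apply: good_comp; first exact: goodB.
    exact: norm_continuous.
  have hS : forall x, @unit_cube R p x -> `|f x - fp x| <= S.
    move=> x cx; apply: sup_upper_bound; last by exists x.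
    apply: compact_has_sup; first by exists `|f 0 - fp 0|, 0 => //; exact: cube0.
    have HH := continuous_compact gd (@cube_compact R p).
    exact: HH.
  have S0 : 0 <= S by apply: le_trans (hS 0 (@cube0 R p)).
  have Cb : `|beta 0 j / 12| <= S / 2.
    rewrite bf.
    rewrite (I_ext (h := fun x => (f x - fp x) * (x 0 j - 2^-1) + fp x * (x 0 j - 2^-1))); last first.
      by move=> x; ring.
    rewrite I_lin; last 2 first.
    - by apply: goodM => //; exact: goodB.
    - exact: goodM.
    rewrite (indep (g := fp) (h := fun t => t - 2^-1)) //; last 2 first.
    - by move=> t; apply: cvgB; [exact: cvg_id | exact: cvg_cst].
    - move=> x y H; rewrite /fp; congr ft; apply/rowP => i; rewrite !mxE; apply: H.
      by rewrite -val_eqE /= neq_ltn (leq_trans (ltn_ord i) hj).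
    rewrite int_w mul0r addr0.
    rewrite -[X in `|X|]subr0 -(@I_cst R p 0).

    apply: (I_close (@lin_all R p)) => //; first by apply: goodM => //; exact: goodB.
    move=> x cx; rewrite subr0 normrM.
    have hx : `|x 0 j - 2^-1| <= 2^-1.
      by have := cx j; move=> /andP [a b]; apply/ler_normlP; split; lra.
    have h1 := hS x cx.
    have h2 := normr_ge0 (f x - fp x).
    have h3 := normr_ge0 (x 0 j - 2^-1).
    nra.
  have hS' : S < eta := hsup.
  rewrite nb; lra.
- move=> j hj; have := hcorr j hj; rewrite Cj nb => h; lra.
Qed.
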